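(* Suppose a HIRB tree with $n$ items has height $H\ge\log_\beta n$, and let $X$ be the total number of nodes in the HIRB, a random variable over the choice of hash function in initializing the HIRB. Then for any $m\ge 1$, $$\Pr[X\ge H+4n+m]<0.883^m.$$
   Context: HIRB tree: parameters an integer $\beta$ (expected branching factor) and height $H$; labels are hashed by a hash function chosen (salted) at initialization, and each label receives a height $\mathsf{chooseheight}(\mathsf{label})\in\{0,\dots,H\}$ derived pseudorandomly from its hash. The HIRB is a rooted search tree with levels $H$ (root) down to $0$ (leaves), storing items sorted by label hash, such that for each level $\ell$ the nodes at level $\ell$ correspond to the intervals into which the hashes of items of height $>\ell$ partition the hash space, each such node containing exactly the items of height $\ell$ whose hash lies in its interval; a node with $k-1$ items has $k$ children. The empty HIRB is a chain of $H+1$ nodes. Standing assumption (Assumption 1): for any $n$ distinct labels stored in a HIRB, their heights are independent random samples from a geometric distribution with probability $(\beta-1)/\beta$ truncated to $\{0,1,\dots,H\}$ (i.e., $\Pr[\text{height}\ge i]=\beta^{-i}$ for $0\le i\le H$), the randomness coming entirely from the random oracle and random function chosen at creation of the HIRB. *)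

(* Defs.v *)
From HB Require Import structures.
From mathcomp Require Import all_boot all_order all_algebra.
Set Implicit Arguments. Unset Strict Implicit. Unset Printing Implicit Defensive.
Import Order.TTheory GRing.Theory Num.Theory.
Local Open Scope ring_scope.

(* Tail of the height distribution (Assumption 1):
   Pr[height >= j] = beta^-j for 0 <= j <= H, and 0 for j > H. *)
Definition height_tail (R : realFieldType) (beta H j : nat) : R :=
  if (j <= H)%N then (beta%:R ^- j) else 0.

(* Probability mass of a single item's height k in {0,...,H}:
   geometric with parameter (beta-1)/beta truncated to {0,..,H}. *)
Definition height_pmf (R : realFieldType) (beta H : nat) (k : 'I_H.+1) : R :=
  height_tail R beta H k - height_tail R beta H k.+1.

(* An outcome of the random choice: the heights of the n stored items
   (item i has height h i). By Assumption 1 these are independent with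
   law height_pmf, i.e. the outcome h has probability
   \prod_i height_pmf (h i). *)
Definition hirb_prob (R : realFieldType) (beta n H : nat)
  (E : pred {ffun 'I_n -> 'I_H.+1}) : R :=
  \sum_(h : {ffun 'I_n -> 'I_H.+1} | E h) \prod_(i < n) @height_pmf R beta H (h i).

Definition separators (n H : nat) (h : {ffun 'I_n -> 'I_H.+1}) (l : 'I_H.+1)
  : {set 'I_n} := [set i | (l < h i)%N].

(* Nodes at level l = intervals into which the (distinct) hashes of the
   separators partition the hash space: #separators + 1. *)
Definition nodes_at_level (n H : nat) (h : {ffun 'I_n -> 'I_H.+1}) (l : 'I_H.+1)
  : nat := (#|separators h l|).+1.

(* Total number of nodes of the HIRB over levels H (root) ... 0 (leaves). *)
Definition hirb_nodes (n H : nat) (h : {ffun 'I_n -> 'I_H.+1}) : nat :=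
  (\sum_(l < H.+1) nodes_at_level h l)%N.

Arguments height_tail R beta H j : clear implicits.
Arguments height_pmf R beta H k : clear implicits.
Arguments hirb_prob R beta n H E : clear implicits.

(* Main.v *)
Require Import Defs.
From HB Require Import structures.
From mathcomp Require Import all_boot all_order all_algebra.
From mathcomp Require Import zify ring lra.
Import Order.TTheory GRing.Theory Num.Theory.
Local Open Scope ring_scope.

Lemma sum_lt_min (N k : nat) : (\sum_(l < N) (l < k) = minn k N)%N.
Proof.
elim: N => [|N IH]; first by rewrite big_ord0; lia.
rewrite big_ord_recr /= IH; case: ltnP => /= ?; lia.
Qed.

Lemma nodes_eq (n H : nat) (h : {ffun 'I_n -> 'I_H.+1}) :
  hirb_nodes h = (H.+1 + \sum_i h i)%N.
Proof.
rewrite /hirb_nodes /nodes_at_level.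
rewrite (eq_bigr (fun l => #|separators h l| + 1)%N); last by move=> *; rewrite addn1.
rewrite big_split /= sum_nat_const card_ord muln1 addnC.
congr (_ + _)%N.
have Hc l : #|separators h l| = (\sum_i (l < h i))%N.
  rewrite -sum1_card big_mkcond /=; apply: eq_bigr => i _.
  by rewrite /separators inE; case: ltnP.
under eq_bigr do rewrite Hc.
rewrite exchange_big /=; apply: eq_bigr => i _.
have := ltn_ord (h i); rewrite sum_lt_min; lia.
Qed.

Lemma F_bound0 (R : realFieldType) (q t : R) (N : nat) :
  t = 6/5 -> 0 <= q -> q <= 1/2 ->
  \sum_(j < N) (q ^+ j - q ^+ j.+1) * t ^+ j + q ^+ N * t ^+ N
   + 1/4 * (q * t) ^+ N <= 5/4.
Proof.
move=> ht q0 q2; elim: N => [|N IH]; first by rewrite big_ord0 !expr0; lra.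
rewrite big_ord_recr /= !exprS exprMn.
have a0 : 0 <= q ^+ N by exact: exprn_ge0.
have b0 : 0 <= t ^+ N by apply: exprn_ge0; lra.
have ab : 0 <= q ^+ N * t ^+ N by exact: mulr_ge0.
move: IH; rewrite exprMn.
set S := \sum_(_ < _) _; set a := q ^+ N; set b := t ^+ N => IH.
have h2 : 0 <= 1/4 - q/2 by lra.
have := mulr_ge0 ab h2.
move=> hh; rewrite -/a -/b in hh; rewrite ht; nra.
Qed.

Lemma tailE (R : realFieldType) beta H j :
  height_tail R beta H j = if (j <= H)%N then (beta%:R^-1) ^+ j else 0.
Proof. by rewrite /height_tail exprVn. Qed.

Lemma q_props (R : realFieldType) beta : (1 < beta)%N ->
  0 <= (beta%:R : R)^-1 /\ (beta%:R : R)^-1 <= 1/2.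
Proof.
move=> hb; have b2 : (2 : R) <= beta%:R by rewrite (ler_nat R 2).
split; first by rewrite invr_ge0; lra.
rewrite mul1r lef_pV2 ?posrE //; lra.
Qed.

Lemma pmf_ge0 (R : realFieldType) beta H j : (1 < beta)%N ->
  0 <= height_pmf R beta H j.
Proof.
move=> hb; have [q0 q2] := @q_props R beta hb.
rewrite /height_pmf !tailE; set q := _^-1.
have qj : 0 <= q ^+ j by exact: exprn_ge0.
case: leqP => h1; case: leqP => h2; rewrite ?subr0 ?subrr //; try lia.
rewrite -/q in q0 q2.
have h3 : 0 <= 1/2 - q by lra.
have := mulr_ge0 qj h3.
rewrite exprS => hh; set x := q ^+ j in qj hh *; nra.
Qed.

Lemma item_bound (R : realFieldType) beta H : (1 < beta)%N ->
  \sum_(j < H.+1) height_pmf R beta H j * (6/5) ^+ j <= 5/4.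
Proof.
move=> hb; have [q0 q2] := @q_props R beta hb.
rewrite big_ord_recr /=.
have := @F_bound0 R _ (6/5) H (erefl _) q0 q2.
set q := _^-1 in q0 q2 *.
have e1 : \sum_(i < H) height_pmf R beta H (widen_ord (leqnSn H) i) * (6 / 5) ^+ i
   = \sum_(j < H) (q ^+ j - q ^+ j.+1) * (6/5) ^+ j.
  apply: eq_bigr => i _; rewrite /height_pmf !tailE /=.
  have := ltn_ord i; case: leqP => ?; case: leqP => ? ? //; lia.
rewrite e1 /height_pmf !tailE /= leqnn ltnn subr0.
have : 0 <= 1/4 * (q * (6/5)) ^+ H.
  apply: mulr_ge0; first lra. apply: exprn_ge0; nra.
lra.
Qed.

Lemma final_num (R : realFieldType) (n m : nat) : (0 < n)%N -> (1 <= m)%N ->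
  (5/6 : R) ^+ (4 * n + m).-1 * (5/4) ^+ n < (883%:R / 1000%:R) ^+ m.
Proof.
move=> hn hm.
have -> : (4 * n + m).-1 = (4 * n.-1 + 3 + m)%N by lia.
have -> : (5/4 : R) ^+ n = (5/4) ^+ n.-1 * (5/4) by rewrite -exprSr prednK.
rewrite (exprD _ (4 * n.-1 + 3)) (exprD _ (4 * n.-1)) exprM.
set y := (5/6 : R) ^+ m; set z := ((5/6 : R) ^+ 4) ^+ n.-1; set w := (5/4 : R) ^+ n.-1.
have zw : z * w <= 1.
  rewrite /z /w -exprMn; apply: exprn_ile1.
    by apply: mulr_ge0; [apply: exprn_ge0|]; lra.
  rewrite (_ : (5/6 : R) ^+ 4 = 625/1296); first lra.
  by rewrite !exprS expr0; field.
have zw0 : 0 <= z * w by apply: mulr_ge0; apply: exprn_ge0; lra.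
have y0 : 0 < y by apply: exprn_gt0; lra.
have yy : y <= (883%:R / 1000%:R) ^+ m.
  apply: lerXn2r; rewrite ?nnegrE; lra.
have -> : (5/6 : R) ^+ 3 = 125/216 by rewrite !exprS expr0; field.
have h1 : 0 <= 1 - z * w by lra.
have := mulr_ge0 h1 (ltW y0).
nra.
Qed.

Theorem lemma2 (R : realFieldType) (beta n H m : nat) :
  (1 < beta)%N -> (0 < n)%N -> (n <= beta ^ H)%N -> (1 <= m)%N ->
  hirb_prob R beta n H (fun h => (H + 4 * n + m <= hirb_nodes h)%N)
    < (883%:R / 1000%:R) ^+ m.
Proof.
move=> hb hn _ hm.
set k := (4 * n + m).-1.
set E := (fun h : {ffun 'I_n -> 'I_H.+1} => (H + 4 * n + m <= hirb_nodes h)%N).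
set p := height_pmf R beta H.
have p0 j : 0 <= p j by exact: pmf_ge0.
set g := fun j : 'I_H.+1 => p j * (6/5 : R) ^+ j.
have g0 j : 0 <= g j by apply: mulr_ge0 => //; apply: exprn_ge0; lra.
have Hprod h : E h -> \prod_i p (h i) <= (5/6) ^+ k * \prod_i g (h i).
  rewrite /E nodes_eq => hE.
  have hk : (k <= \sum_i h i)%N by rewrite /k; lia.
  rewrite /g big_split /= prodrXr -(subnKC hk) exprD.
  set P := \prod_i _; set d := (_ - k)%N.
  have -> : (5/6 : R) ^+ k * (P * ((6/5) ^+ k * (6/5) ^+ d))
           = P * (((5/6) * (6/5)) ^+ k * (6/5) ^+ d). 
    by move: (5/6 : R) (6/5 : R) => a b; rewrite exprMn; ring.
  have -> : (5/6 : R) * (6/5) = 1 by field.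
  rewrite expr1n mul1r; apply: ler_peMr.
    by apply: prodr_ge0.
  by apply: exprn_ege1; lra.
apply: (le_lt_trans _ (@final_num R n m hn hm)).
rewrite /hirb_prob -/p.
apply: (le_trans (ler_sum _ (fun h hE => Hprod h hE))).
apply: (@le_trans _ _ (\sum_(h : {ffun 'I_n -> 'I_H.+1}) (5/6 : R) ^+ k * \prod_i g (h i))).
  rewrite [X in _ <= X](bigID E) /= lerDl; apply: sumr_ge0 => h _.
  apply: mulr_ge0; [apply: exprn_ge0; lra | exact: prodr_ge0].
rewrite -mulr_sumr; apply: ler_wpM2l; first by apply: exprn_ge0; lra.
rewrite -(bigA_distr_bigA (fun (_ : 'I_n) (j : 'I_H.+1) => g j)) /= prodr_const card_ord.
apply: lerXn2r; rewrite ?nnegrE; first exact: sumr_ge0.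
  lra.
exact: item_bound.
Qed.
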